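(* A set $A\subseteq\mathbb{N}$ is $D$-w.e.u. if and only if it is $wtt$-complete.
   Context: $\varphi_0,\varphi_1,\ldots$ is a standard acceptable enumeration of the partial computable functions $\mathbb{N}\to\mathbb{N}$; $\varphi_e^A$ denotes the $e$th partial function computable with oracle $A$; $\mathcal{K}=\{e:\varphi_e(e)\text{ defined}\}$; $\mathbb{1}_A$ the characteristic function of $A$. $\mathfrak{P}_{\mathrm{fin}}(\mathbb{N})$ is the set of finite subsets of $\mathbb{N}$; $f\colon\mathbb{N}\to\mathfrak{P}_{\mathrm{fin}}(\mathbb{N})$ is computable if $e\mapsto$ (canonical index of $f(e)$) is computable. A recursively enumerable $A$ is $D$-w.e.u. if there is a computable $f\colon\mathbb{N}\to\mathfrak{P}_{\mathrm{fin}}(\mathbb{N})$ such that for all $e$: if $\varphi_e(z)$ is defined for all $z\in f(e)$, then there is $z\in f(e)$ with $\varphi_e(z)\neq\mathbb{1}_A(z)$. A recursively enumerable $A$ is $wtt$-complete if there are an index $e$ and a total computable $f\colon\mathbb{N}\to\mathbb{N}$ such that $\mathbb{1}_{\mathcal{K}}=\varphi_e^A$ and for every $x$ the computation of $\varphi_e^A(x)$ queries the oracle only about numbers below $f(x)$. *)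

(* Defs.v *)
(* A concrete model of (oracle) partial computable functions:
   unary partial mu-recursive functions on nat with Cantor pairing, an oracle
   primitive, and a Goedel numbering [decode : nat -> code]. *)
From Stdlib Require Import Arith Cantor.

Inductive code : Type :=
| CZero : code
| CSucc : code
| CId : code
| CFst : code
| CSnd : code
| COracle : code
| CPair : code -> code -> code
| CComp : code -> code -> code
| CPrimRec : code -> code -> code    (* h<x,0> = f x ; h<x,n+1> = g <x,<n,h<x,n>>> *)
| CMu : code -> code.                (* z |-> least n with f<z,n> = 0 *)

Definition charf (A : nat -> Prop) (z v : nat) : Prop :=
  (A z /\ v = 1) \/ (~ A z /\ v = 0).

(** Big-step semantics with oracle [A]; every oracle query [q] made during
    the computation must satisfy [Q q] (take [Q := fun _ => True] for no
    restriction).  Since the semantics is deterministic, [evalq A Q c z y]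
    says: the computation of program [c] with oracle [A] on input [z]
    converges with output [y] and queries the oracle only on numbers in [Q]. *)
Inductive evalq (A : nat -> Prop) (Q : nat -> Prop) : code -> nat -> nat -> Prop :=
| ev_zero z : evalq A Q CZero z 0
| ev_succ z : evalq A Q CSucc z (S z)
| ev_id z : evalq A Q CId z z
| ev_fst z : evalq A Q CFst z (fst (of_nat z))
| ev_snd z : evalq A Q CSnd z (snd (of_nat z))
| ev_oracle z v : Q z -> charf A z v -> evalq A Q COracle z v
| ev_pair f g z a b :
    evalq A Q f z a -> evalq A Q g z b -> evalq A Q (CPair f g) z (to_nat (a, b))
| ev_comp f g z w y :
    evalq A Q g z w -> evalq A Q f w y -> evalq A Q (CComp f g) z y
| ev_prim0 f g z x y :
    of_nat z = (x, 0) -> evalq A Q f x y -> evalq A Q (CPrimRec f g) z y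
| ev_primS f g z x n r y :
    of_nat z = (x, S n) ->
    evalq A Q (CPrimRec f g) (to_nat (x, n)) r ->
    evalq A Q g (to_nat (x, to_nat (n, r))) y ->
    evalq A Q (CPrimRec f g) z y
| ev_mu f z n :
    evalq A Q f (to_nat (z, n)) 0 ->
    (forall m, m < n -> exists k, evalq A Q f (to_nat (z, m)) (S k)) ->
    evalq A Q (CMu f) z n.

(** Goedel numbering: total decoding of numbers into programs (surjective). *)
Fixpoint decode_aux (fuel e : nat) : code :=
  match fuel with
  | 0 => CZero
  | S k =>
    let (t, r) := of_nat e in
    match t with
    | 0 => CZero
    | 1 => CSucc
    | 2 => CId
    | 3 => CFst
    | 4 => CSnd
    | 5 => COracle
    | 6 => CPair (decode_aux k (fst (of_nat r))) (decode_aux k (snd (of_nat r)))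
    | 7 => CComp (decode_aux k (fst (of_nat r))) (decode_aux k (snd (of_nat r)))
    | 8 => CPrimRec (decode_aux k (fst (of_nat r))) (decode_aux k (snd (of_nat r)))
    | 9 => CMu (decode_aux k r)
    | _ => CZero
    end
  end.

Definition decode (e : nat) : code := decode_aux (S e) e.

Definition phiA (A : nat -> Prop) (e x y : nat) : Prop :=
  evalq A (fun _ => True) (decode e) x y.

Definition phi (e x y : nat) : Prop := phiA (fun _ => False) e x y.

Definition K (e : nat) : Prop := exists y, phi e e y.

Definition re (A : nat -> Prop) : Prop :=
  exists e, forall x, A x <-> exists y, phi e x y.

Definition computable (f : nat -> nat) : Prop :=
  exists e, forall x, phi e x (f x).

(** Canonical finite sets: D_n = { i | bit i of n is 1 }.  A function
    N -> P_fin(N) is represented by the map to canonical indices. *)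
Definition canon (n : nat) (i : nat) : Prop := Nat.testbit n i = true.

Definition D_weu (A : nat -> Prop) : Prop :=
  re A /\
  exists f : nat -> nat, computable f /\
    forall e,
      (forall z, canon (f e) z -> exists y, phi e z y) ->
      exists z, canon (f e) z /\ exists y, phi e z y /\ ~ charf A z y.

Definition wtt_complete (A : nat -> Prop) : Prop :=
  re A /\
  exists (e : nat) (f : nat -> nat), computable f /\
    forall x, exists y,
      charf K x y /\ phiA A e x y /\
      evalq A (fun q => q < f x) (decode e) x y.

(* Main.v *)
Require Import Defs.
From Stdlib Require Import Arith Cantor Lia List Classical ClassicalEpsilon Morphisms Setoid.
Arguments to_nat : simpl never.
Arguments of_nat : simpl never.
Ltac cn := repeat progress (rewrite ?cancel_of_to; cbn [fst snd]).
Local Open Scope bool_scope.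

Section Ind.
Variables (A Q : nat -> Prop) (P : code -> nat -> nat -> Prop).
Hypotheses
 (Hz : forall z, P CZero z 0)
 (Hs : forall z, P CSucc z (S z))
 (Hi : forall z, P CId z z)
 (Hf : forall z, P CFst z (fst (of_nat z)))
 (Hsn : forall z, P CSnd z (snd (of_nat z)))
 (Ho : forall z v, Q z -> charf A z v -> P COracle z v)
 (Hp : forall f g z a b, evalq A Q f z a -> P f z a -> evalq A Q g z b -> P g z b -> P (CPair f g) z (to_nat (a, b)))
 (Hc : forall f g z w y, evalq A Q g z w -> P g z w -> evalq A Q f w y -> P f w y -> P (CComp f g) z y)
 (Hp0 : forall f g z x y, of_nat z = (x, 0) -> evalq A Q f x y -> P f x y -> P (CPrimRec f g) z y)
 (HpS : forall f g z x n r y, of_nat z = (x, S n) ->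
    evalq A Q (CPrimRec f g) (to_nat (x, n)) r -> P (CPrimRec f g) (to_nat (x, n)) r ->
    evalq A Q g (to_nat (x, to_nat (n, r))) y -> P g (to_nat (x, to_nat (n, r))) y ->
    P (CPrimRec f g) z y)
 (Hmu : forall f z n, evalq A Q f (to_nat (z, n)) 0 -> P f (to_nat (z, n)) 0 ->
    (forall m, m < n -> exists k, evalq A Q f (to_nat (z, m)) (S k) /\ P f (to_nat (z, m)) (S k)) ->
    P (CMu f) z n).

Fixpoint evind c z y (H : evalq A Q c z y) {struct H} : P c z y :=
  match H in evalq _ _ c z y return P c z y with
  | ev_zero _ _ z => Hz z
  | ev_succ _ _ z => Hs z
  | ev_id _ _ z => Hi z
  | ev_fst _ _ z => Hf z
  | ev_snd _ _ z => Hsn z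
  | ev_oracle _ _ z v q ch => Ho z v q ch
  | ev_pair _ _ f g z a b H1 H2 => Hp f g z a b H1 (evind _ _ _ H1) H2 (evind _ _ _ H2)
  | ev_comp _ _ f g z w y H1 H2 => Hc f g z w y H1 (evind _ _ _ H1) H2 (evind _ _ _ H2)
  | ev_prim0 _ _ f g z x y e H1 => Hp0 f g z x y e H1 (evind _ _ _ H1)
  | ev_primS _ _ f g z x n r y e H1 H2 => HpS f g z x n r y e H1 (evind _ _ _ H1) H2 (evind _ _ _ H2)
  | ev_mu _ _ f z n H0 Hl => Hmu f z n H0 (evind _ _ _ H0)
      (fun m hm => match Hl m hm with ex_intro _ k Hk => ex_intro _ k (conj Hk (evind _ _ _ Hk)) end)
  end.
End Ind.

Lemma charf_det A z v w : charf A z v -> charf A z w -> v = w.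
Proof. unfold charf; intuition; subst; auto; contradiction. Qed.

Lemma evalq_det A Q c z y1 : evalq A Q c z y1 ->
  forall Q' y2, evalq A Q' c z y2 -> y1 = y2.
Proof.
  revert c z y1. intros c z y1 H.
  induction H using evind; intros Q' y2 H2; inversion H2; subst; auto;
  repeat match goal with
  | E1 : of_nat ?z = _, E2 : of_nat ?z = _ |- _ => rewrite E1 in E2; injection E2; clear E2; intros; subst
  | E1 : of_nat ?z = _, E2 : of_nat ?z = _ |- _ => rewrite E1 in E2; discriminate
  | IH : forall Q' y2, evalq _ Q' ?f ?z y2 -> ?v = y2, Hx : evalq _ _ ?f ?z ?w |- _ =>
      let e := fresh in pose proof (IH _ _ Hx) as e; clear Hx; subst
  end; auto; try congruence.
  - eapply charf_det; eauto.
  - match goal with |- ?n = ?y2 => destruct (lt_eq_lt_dec n y2) as [[h|h]|h]; auto end.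
    + match goal with Hl : forall m, m < y2 -> exists k, _ |- _ =>
        destruct (Hl _ h) as [k Hk] end.
      match goal with IH : forall Q' y2, evalq _ Q' f _ y2 -> 0 = y2 |- _ =>
        specialize (IH _ _ Hk); discriminate end.
    + match goal with Hl : forall m, m < n -> exists k, _ /\ _ |- _ =>
        destruct (Hl _ h) as [k [_ Hk]] end.
      match goal with Hx : evalq _ _ f _ 0 |- _ => specialize (Hk _ _ Hx); discriminate end.
Qed.

Lemma evalq_mono A Q Q' c z y : evalq A Q c z y -> (forall q, Q q -> Q' q) -> evalq A Q' c z y.
Proof.
  intros H HQ. induction H using evind.
  all: try (eapply ev_primS; eauto; fail).
  all: try (econstructor; eauto; fail).
  constructor; auto. intros m hm; match goal with Hl : forall m, m < _ -> _ |- _ => destruct (Hl m hm) as [k [_ Hk]] end; eauto.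
Qed.

Lemma of_nat_bound e t r : of_nat e = (t, r) -> r + t <= e.
Proof. intro H. rewrite <- (cancel_to_of e), H. apply to_nat_non_decreasing. Qed.

Lemma decode_aux_fuel k1 : forall k2 e, e < k1 -> e < k2 -> decode_aux k1 e = decode_aux k2 e.
Proof.
  induction k1 as [|k1 IH]; intros [|k2] e h1 h2; try lia.
  simpl. destruct (of_nat e) as [t r] eqn:E.
  apply of_nat_bound in E.
  destruct (of_nat r) as [r1 r2] eqn:E2. apply of_nat_bound in E2. simpl.
  destruct t as [|[|[|[|[|[|[|[|[|[|t]]]]]]]]]]; auto;
  try (f_equal; apply IH; lia).
Qed.

Definition dstep (e : nat) : code :=
  let (t, r) := of_nat e in
  match t with
  | 0 => CZero | 1 => CSucc | 2 => CId | 3 => CFst | 4 => CSnd | 5 => COracle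
  | 6 => CPair (decode (fst (of_nat r))) (decode (snd (of_nat r)))
  | 7 => CComp (decode (fst (of_nat r))) (decode (snd (of_nat r)))
  | 8 => CPrimRec (decode (fst (of_nat r))) (decode (snd (of_nat r)))
  | 9 => CMu (decode r)
  | _ => CZero
  end.

Lemma decode_eq e : decode e = dstep e.
Proof.
  unfold decode, dstep. simpl. destruct (of_nat e) as [t r] eqn:E.
  apply of_nat_bound in E.
  destruct (of_nat r) as [r1 r2] eqn:E2. apply of_nat_bound in E2. simpl.
  destruct t as [|[|[|[|[|[|[|[|[|[|t]]]]]]]]]]; auto;
  try (unfold decode; f_equal; apply decode_aux_fuel; lia).
Qed.

Lemma dec_tag t r : decode (to_nat (t, r)) = dstep (to_nat (t, r)).
Proof. apply decode_eq. Qed.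

Lemma dec_pair a b : decode (to_nat (6, to_nat (a, b))) = CPair (decode a) (decode b).
Proof. rewrite decode_eq; unfold dstep; cn; reflexivity. Qed.
Lemma dec_comp a b : decode (to_nat (7, to_nat (a, b))) = CComp (decode a) (decode b).
Proof. rewrite decode_eq; unfold dstep; cn; reflexivity. Qed.
Lemma dec_prim a b : decode (to_nat (8, to_nat (a, b))) = CPrimRec (decode a) (decode b).
Proof. rewrite decode_eq; unfold dstep; cn; reflexivity. Qed.
Lemma dec_mu a : decode (to_nat (9, a)) = CMu (decode a).
Proof. rewrite decode_eq; unfold dstep; cn; reflexivity. Qed.

Fixpoint enc (c : code) : nat :=
  match c with
  | CZero => to_nat (0, 0) | CSucc => to_nat (1, 0) | CId => to_nat (2, 0)
  | CFst => to_nat (3, 0) | CSnd => to_nat (4, 0) | COracle => to_nat (5, 0)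
  | CPair f g => to_nat (6, to_nat (enc f, enc g))
  | CComp f g => to_nat (7, to_nat (enc f, enc g))
  | CPrimRec f g => to_nat (8, to_nat (enc f, enc g))
  | CMu f => to_nat (9, enc f)
  end.

Lemma dec_enc c : decode (enc c) = c.
Proof.
  induction c; cbn [enc];
  try (rewrite decode_eq; unfold dstep; rewrite cancel_of_to; reflexivity).
  all: try (rewrite ?dec_pair, ?dec_comp, ?dec_prim, ?dec_mu; congruence).

Qed.

Fixpoint cconst (n : nat) : code := match n with 0 => CZero | S n => CComp CSucc (cconst n) end.
Lemma cconst_spec A Q n z : evalq A Q (cconst n) z n.
Proof. induction n; simpl; econstructor; eauto; constructor. Qed.

Fixpoint csnds (n : nat) : code := match n with 0 => CId | S n => CComp CSnd (csnds n) end.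

Fixpoint encE (l : list nat) : nat := match l with nil => 0 | v :: l => to_nat (v, encE l) end.

Lemma ev_fst' A Q z y : y = fst (of_nat z) -> evalq A Q CFst z y.
Proof. intros ->; constructor. Qed.
Lemma ev_snd' A Q z y : y = snd (of_nat z) -> evalq A Q CSnd z y.
Proof. intros ->; constructor. Qed.
Lemma ev_pair' A Q f g z a b y : evalq A Q f z a -> evalq A Q g z b -> y = to_nat (a, b) -> evalq A Q (CPair f g) z y.
Proof. intros ? ? ->; constructor; auto. Qed.
Lemma ev_zero' A Q z y : y = 0 -> evalq A Q CZero z y.
Proof. intros ->; constructor. Qed.
Lemma ev_succ' A Q z y : y = S z -> evalq A Q CSucc z y.
Proof. intros ->; constructor. Qed.
Lemma ev_id' A Q z y : y = z -> evalq A Q CId z y.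
Proof. intros ->; constructor. Qed.

Lemma snd_encE l : snd (of_nat (encE l)) = encE (tl l).
Proof. destruct l; simpl; [reflexivity | rewrite cancel_of_to; reflexivity]. Qed.
Lemma fst_encE l : fst (of_nat (encE l)) = hd 0 l.
Proof. destruct l; simpl; [reflexivity | rewrite cancel_of_to; reflexivity]. Qed.
Lemma skipn_S_tl {X} n : forall (l : list X), skipn (S n) l = tl (skipn n l).
Proof. induction n; intros [|a l]; simpl; auto. rewrite <- IHn. destruct l; reflexivity. Qed.
Lemma nth_hd_skipn n : forall (l : list nat), nth n l 0 = hd 0 (skipn n l).
Proof. induction n; intros [|a l]; simpl; auto. Qed.

Lemma csnds_spec A Q n : forall l, evalq A Q (csnds n) (encE l) (encE (skipn n l)).
Proof.
  induction n; intros l; simpl. constructor.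
  econstructor. apply IHn. apply ev_snd'. rewrite snd_encE, <- skipn_S_tl. reflexivity.
Qed.

Definition cvar n := CComp CFst (csnds n).
Lemma cvar_spec A Q n l : evalq A Q (cvar n) (encE l) (nth n l 0).
Proof. econstructor. apply csnds_spec. apply ev_fst'. rewrite fst_encE, nth_hd_skipn; reflexivity. Qed.

Lemma prim_pt A Q f g x (H : nat -> nat) N :
  evalq A Q f x (H 0) -> (forall n, n < N -> evalq A Q g (to_nat (x, to_nat (n, H n))) (H (S n))) ->
  evalq A Q (CPrimRec f g) (to_nat (x, N)) (H N).
Proof.
  intros H0 HS. induction N.
  - eapply ev_prim0; eauto. apply cancel_of_to.
  - eapply ev_primS. apply cancel_of_to. apply IHN; intros; apply HS; lia. apply HS; lia.
Qed.

Definition c_add := CPrimRec CId (CComp CSucc (CComp CSnd CSnd)).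
Lemma c_add_spec A Q x n : evalq A Q c_add (to_nat (x, n)) (x + n).
Proof.
  apply (prim_pt A Q _ _ x (fun n => x + n)). apply ev_id'; lia.
  intros k _. econstructor. econstructor; constructor.
  apply ev_succ'. cn; lia.
Qed.

Definition c_pred := CComp (CPrimRec CZero (CComp CFst CSnd)) (CPair CZero CId).
Lemma c_pred_spec A Q m : evalq A Q c_pred m (pred m).
Proof.
  econstructor. econstructor; constructor.
  apply (prim_pt A Q _ _ 0 pred). constructor.
  intros k _. econstructor. constructor. apply ev_fst'. cn; reflexivity.
Qed.

Definition c_sub := CPrimRec CId (CComp c_pred (CComp CSnd CSnd)).
Lemma c_sub_spec A Q x n : evalq A Q c_sub (to_nat (x, n)) (x - n).
Proof.
  apply (prim_pt A Q _ _ x (fun n => x - n)). apply ev_id'; lia.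
  intros k _. econstructor. econstructor; constructor.
  cn; simpl. replace (x - S k) with (pred (x - k)) by lia. apply c_pred_spec.
Qed.

Definition isz (m : nat) := match m with 0 => 1 | _ => 0 end.
Definition c_isz := CComp (CPrimRec (CComp CSucc CZero) CZero) (CPair CZero CId).
Lemma c_isz_spec A Q m : evalq A Q c_isz m (isz m).
Proof.
  econstructor. econstructor; constructor.
  apply (prim_pt A Q _ _ 0 isz). econstructor; constructor.
  intros k _. constructor.
Qed.

Definition ite (c a b : nat) := match c with 0 => b | _ => a end.
Definition c_if := CPrimRec CSnd (CComp CFst CFst).
Lemma c_if_spec A Q a b c : evalq A Q c_if (to_nat (to_nat (a, b), c)) (ite c a b).
Proof.
  apply (prim_pt A Q _ _ _ (fun c => ite c a b)). apply ev_snd'; rewrite cancel_of_to; reflexivity.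
  intros k _. econstructor. constructor. apply ev_fst'. cn; reflexivity.
Qed.

Inductive expr : Type :=
| EVar (n : nat) | EConst (n : nat) | ESucc (e : expr) | EPair (a b : expr)
| EFst (e : expr) | ESnd (e : expr) | EAdd (a b : expr) | ESub (a b : expr)
| EIsZ (e : expr) | EIf (c a b : expr) | EIter (n i s : expr) | EOracle (e : expr).

Section Den.
Variable b : nat -> nat.
Fixpoint den (e : expr) (env : list nat) : nat :=
  match e with
  | EVar n => nth n env 0
  | EConst n => n
  | ESucc e => S (den e env)
  | EPair x y => to_nat (den x env, den y env)
  | EFst e => fst (of_nat (den e env))
  | ESnd e => snd (of_nat (den e env))
  | EAdd x y => den x env + den y env
  | ESub x y => den x env - den y env
  | EIsZ e => isz (den e env)
  | EIf c x y => ite (den c env) (den x env) (den y env)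
  | EIter n i s =>
      (fix it (k : nat) : nat := match k with 0 => den i env | S k => den s (it k :: k :: env) end) (den n env)
  | EOracle e => b (den e env)
  end.
End Den.

Definition iterv b (i s : expr) env : nat -> nat :=
  fix it (k : nat) : nat := match k with 0 => den b i env | S k => den b s (it k :: k :: env) end.

Lemma den_iter b n i s env : den b (EIter n i s) env = iterv b i s env (den b n env).
Proof. reflexivity. Qed.

Fixpoint ok (A Q : nat -> Prop) (b : nat -> nat) (e : expr) (env : list nat) : Prop :=
  match e with
  | EVar _ | EConst _ => True
  | ESucc e | EFst e | ESnd e | EIsZ e => ok A Q b e env
  | EPair x y | EAdd x y | ESub x y => ok A Q b x env /\ ok A Q b y env
  | EIf c x y => ok A Q b c env /\ ok A Q b x env /\ ok A Q b y env
  | EIter n i s => ok A Q b n env /\ ok A Q b i env /\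
      forall k, k < den b n env -> ok A Q b s (iterv b i s env k :: k :: env)
  | EOracle e => ok A Q b e env /\ Q (den b e env) /\ charf A (den b e env) (b (den b e env))
  end.

Fixpoint compile (e : expr) : code :=
  match e with
  | EVar n => cvar n
  | EConst n => cconst n
  | ESucc e => CComp CSucc (compile e)
  | EPair x y => CPair (compile x) (compile y)
  | EFst e => CComp CFst (compile e)
  | ESnd e => CComp CSnd (compile e)
  | EAdd x y => CComp c_add (CPair (compile x) (compile y))
  | ESub x y => CComp c_sub (CPair (compile x) (compile y))
  | EIsZ e => CComp c_isz (compile e)
  | EIf c x y => CComp c_if (CPair (CPair (compile x) (compile y)) (compile c))
  | EIter n i s => CComp (CPrimRec (compile i)
        (CComp (compile s) (CPair (CComp CSnd CSnd) (CPair (CComp CFst CSnd) CFst))))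
        (CPair CId (compile n))
  | EOracle e => CComp COracle (compile e)
  end.

Lemma compile_ok A Q b e : forall env, ok A Q b e env -> evalq A Q (compile e) (encE env) (den b e env).
Proof.
  induction e; intros env Hok; simpl in Hok |- *.
  - apply cvar_spec.
  - apply cconst_spec.
  - econstructor; eauto. constructor.
  - destruct Hok; constructor; auto.
  - econstructor; eauto. constructor.
  - econstructor; eauto. constructor.
  - destruct Hok. econstructor. constructor; eauto. apply c_add_spec.
  - destruct Hok. econstructor. constructor; eauto. apply c_sub_spec.
  - econstructor; eauto. apply c_isz_spec.
  - destruct Hok as (?&?&?). econstructor. constructor. constructor; eauto. eauto. apply c_if_spec.
  - destruct Hok as (?&?&Hs). econstructor. constructor. constructor. eauto.
    apply (prim_pt A Q _ _ _ (iterv b e2 e3 env)). simpl; auto.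
    intros k hk. econstructor. 2: apply (IHe3 _ (Hs k hk)).
    apply ev_pair' with (a := iterv b e2 e3 env k) (b := encE (k :: env)).
    + eapply ev_comp; [constructor|]. apply ev_snd'. cn; reflexivity.
    + apply ev_pair' with (a := k) (b := encE env).
      * econstructor. constructor. apply ev_fst'. cn; reflexivity.
      * apply ev_fst'. cn; reflexivity.
      * reflexivity.
    + reflexivity.
  - destruct Hok as (?&?&?). econstructor; eauto. constructor; auto.
Qed.

Fixpoint noor (e : expr) : Prop :=
  match e with
  | EVar _ | EConst _ => True
  | ESucc e | EFst e | ESnd e | EIsZ e => noor e
  | EPair x y | EAdd x y | ESub x y => noor x /\ noor y
  | EIf c x y => noor c /\ noor x /\ noor y
  | EIter n i s => noor n /\ noor i /\ noor s
  | EOracle e => False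
  end.

Lemma noor_ok A Q b e : noor e -> forall env, ok A Q b e env.
Proof.
  induction e; simpl; intuition.
Qed.

Definition d0 := den (fun _ => 0).

Lemma noor_den b e : noor e -> forall env, den b e env = d0 e env.
Proof.
  unfold d0. induction e; simpl; intros H env; try tauto; try reflexivity.
  all: try (rewrite IHe; tauto).
  all: try (destruct H as [H1 H2]; rewrite IHe1, IHe2; tauto).
  - destruct H as (H1&H2&H3); rewrite IHe1, IHe2, IHe3; tauto.
  - destruct H as (H1&H2&H3). rewrite IHe1 by tauto.
    induction (den (fun _ => 0) e1 env); simpl. auto.
    rewrite IHn. apply IHe3; auto.
Qed.

Lemma compile_noor A Q e env : noor e -> evalq A Q (compile e) (encE env) (d0 e env).
Proof.
  intro H. apply compile_ok. apply noor_ok; auto.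
Qed.

Fixpoint shift (c d : nat) (e : expr) : expr :=
  match e with
  | EVar n => EVar (if n <? c then n else n + d)
  | EConst n => EConst n
  | ESucc e => ESucc (shift c d e)
  | EPair x y => EPair (shift c d x) (shift c d y)
  | EFst e => EFst (shift c d e)
  | ESnd e => ESnd (shift c d e)
  | EAdd x y => EAdd (shift c d x) (shift c d y)
  | ESub x y => ESub (shift c d x) (shift c d y)
  | EIsZ e => EIsZ (shift c d e)
  | EIf x y z => EIf (shift c d x) (shift c d y) (shift c d z)
  | EIter n i s => EIter (shift c d n) (shift c d i) (shift (S (S c)) d s)
  | EOracle e => EOracle (shift c d e)
  end.

Lemma den_shift b e : forall pre mid env,
  den b (shift (length pre) (length mid) e) (pre ++ mid ++ env) = den b e (pre ++ env).
Proof.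
  induction e; intros pre mid env; simpl; try congruence.
  - destruct (Nat.ltb_spec n (length pre)).
    + rewrite !app_nth1; auto.
    + rewrite !app_nth2 by (try rewrite length_app; lia). f_equal; lia.
  - rewrite IHe1, IHe2.
    induction (den b e1 (pre ++ env)); simpl; auto.
    rewrite IHn. apply (IHe3 (_ :: _ :: pre)).
Qed.

Definition sh1 := shift 0 1.
Lemma den_sh1 b e x env : den b (sh1 e) (x :: env) = den b e env.
Proof. apply (den_shift b e nil (x :: nil)). Qed.

Fixpoint noorb (e : expr) : bool :=
  match e with
  | EVar _ | EConst _ => true
  | ESucc e | EFst e | ESnd e | EIsZ e => noorb e
  | EPair x y | EAdd x y | ESub x y => noorb x && noorb y
  | EIf c x y => noorb c && noorb x && noorb y
  | EIter n i s => noorb n && noorb i && noorb s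
  | EOracle e => false
  end.
Lemma noorb_ok e : noorb e = true -> noor e.
Proof. induction e; simpl; intros; rewrite ?Bool.andb_true_iff in *; intuition. Qed.

Definition b2n (x : bool) : nat := if x then 1 else 0.
Definition nz (x : nat) : bool := negb (x =? 0).

Fixpoint exb (n : nat) (f : nat -> bool) : bool := match n with 0 => false | S n => exb n f || f n end.
Fixpoint allb (n : nat) (f : nat -> bool) : bool := match n with 0 => true | S n => allb n f && f n end.

#[export] Instance exb_proper n : Proper (pointwise_relation nat eq ==> eq) (exb n).
Proof. intros f g H; induction n; simpl; congruence. Qed.
#[export] Instance allb_proper n : Proper (pointwise_relation nat eq ==> eq) (allb n).
Proof. intros f g H; induction n; simpl; congruence. Qed.

Lemma exb_spec n f : exb n f = true <-> exists i, i < n /\ f i = true.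
Proof.
  induction n; simpl. split; [discriminate| intros (i&h&_); lia].
  rewrite Bool.orb_true_iff, IHn. split.
  - intros [(i&h&H)|H]; eauto.
  - intros (i&h&H). destruct (Nat.eq_dec i n); subst; auto. left; exists i; split; auto; lia.
Qed.
Lemma allb_spec n f : allb n f = true <-> forall i, i < n -> f i = true.
Proof.
  induction n; simpl. split; auto; intros; lia.
  rewrite Bool.andb_true_iff, IHn. split.
  - intros [H1 H2] i h. destruct (Nat.eq_dec i n); subst; auto. apply H1; lia.
  - intros H; split; auto.
Qed.

Definition ETrue := EConst 1.
Definition EAnd (x y : expr) := EIf x (EIf y ETrue (EConst 0)) (EConst 0).
Definition EOr (x y : expr) := EIf x ETrue (EIf y ETrue (EConst 0)).
Definition ENz (x : expr) := EIsZ (EIsZ x).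
Definition EEq (x y : expr) := EIsZ (EAdd (ESub x y) (ESub y x)).
Definition EEx (n P : expr) := EIter n (EConst 0) (EIf (EVar 0) ETrue (ENz (sh1 P))).
Definition EAll (n P : expr) := EIsZ (EEx n (EIsZ P)).

Lemma nz_b2n x : nz (b2n x) = x.
Proof. destruct x; reflexivity. Qed.
Section M.
Variable b : nat -> nat.
Lemma den_and x y env : den b (EAnd x y) env = b2n (nz (den b x env) && nz (den b y env)).
Proof. simpl. destruct (den b x env), (den b y env); reflexivity. Qed.
Lemma den_or x y env : den b (EOr x y) env = b2n (nz (den b x env) || nz (den b y env)).
Proof. simpl. destruct (den b x env), (den b y env); reflexivity. Qed.
Lemma den_nz x env : den b (ENz x) env = b2n (nz (den b x env)).
Proof. simpl. destruct (den b x env); reflexivity. Qed.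
Lemma den_isz x env : den b (EIsZ x) env = b2n (negb (nz (den b x env))).
Proof. simpl. destruct (den b x env); reflexivity. Qed.
Lemma den_eq x y env : den b (EEq x y) env = b2n (den b x env =? den b y env).
Proof.
  simpl. destruct (Nat.eqb_spec (den b x env) (den b y env)).
  - rewrite e, Nat.sub_diag; reflexivity.
  - destruct (den b x env - den b y env + (den b y env - den b x env)) eqn:E; [lia|reflexivity].
Qed.
Lemma den_ex n P env : den b (EEx n P) env = b2n (exb (den b n env) (fun j => nz (den b P (j :: env)))).
Proof.
  unfold EEx. rewrite den_iter. induction (den b n env); simpl. reflexivity.
  fold (iterv b (EConst 0) (EIf (EVar 0) ETrue (ENz (sh1 P))) env n0).
  rewrite IHn0. rewrite den_sh1. destruct (exb n0 _); simpl; auto.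
  destruct (den b P (n0 :: env)); reflexivity.
Qed.
Lemma den_all n P env : den b (EAll n P) env = b2n (allb (den b n env) (fun j => nz (den b P (j :: env)))).
Proof.
  unfold EAll. rewrite den_isz, den_ex.
  assert (forall k, negb (exb k (fun j => nz (den b (EIsZ P) (j :: env)))) = allb k (fun j => nz (den b P (j :: env)))).
  { induction k; cbn [exb allb]; auto. rewrite Bool.negb_orb, IHk. f_equal. rewrite den_isz.
    destruct (nz (den b P (k :: env))); reflexivity. }
  rewrite nz_b2n, H. reflexivity.
Qed.
End M.
#[export] Instance exb_proper2 : Proper (eq ==> pointwise_relation nat eq ==> eq) exb.
Proof. intros n m <- f g H. apply exb_proper; auto. Qed.
#[export] Instance allb_proper2 : Proper (eq ==> pointwise_relation nat eq ==> eq) allb.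
Proof. intros n m <- f g H. apply allb_proper; auto. Qed.

Definition trip e z y := to_nat (e, to_nat (z, y)).
Definition cdE x := fst (of_nat x).
Definition cdZ x := fst (of_nat (snd (of_nat x))).
Definition cdY x := snd (of_nat (snd (of_nat x))).
Lemma cdE_trip e z y : cdE (trip e z y) = e. Proof. unfold cdE, trip; cn; auto. Qed.
Lemma cdZ_trip e z y : cdZ (trip e z y) = z. Proof. unfold cdZ, trip; cn; auto. Qed.
Lemma cdY_trip e z y : cdY (trip e z y) = y. Proof. unfold cdY, trip; cn; auto. Qed.
Lemma trip_cd x : trip (cdE x) (cdZ x) (cdY x) = x.
Proof. unfold trip, cdE, cdZ, cdY. rewrite <- surjective_pairing, cancel_to_of, <- surjective_pairing, cancel_to_of. auto. Qed.

Definition tlN L := snd (of_nat (pred L)).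
Definition hdN L := fst (of_nat (pred L)).
Definition itl i L := Nat.iter i tlN L.
Definition nthN L i := hdN (itl i L).
Fixpoint encL (l : list nat) : nat := match l with nil => 0 | h :: t => S (to_nat (h, encL t)) end.

Definition justN (n : nat) (P : nat -> Prop) : Prop :=
  let z := cdZ n in let y := cdY n in
  match of_nat (cdE n) with (t, r) =>
  match t with
  | 0 => y = 0 | 1 => y = S z | 2 => y = z | 3 => y = fst (of_nat z) | 4 => y = snd (of_nat z) | 5 => y = 0
  | 6 => P (trip (fst (of_nat r)) z (fst (of_nat y))) /\ P (trip (snd (of_nat r)) z (snd (of_nat y)))
  | 7 => exists w, P (trip (snd (of_nat r)) z w) /\ P (trip (fst (of_nat r)) w y)
  | 8 => match snd (of_nat z) with
         | 0 => P (trip (fst (of_nat r)) (fst (of_nat z)) y)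
         | S m => exists w, P (trip (cdE n) (to_nat (fst (of_nat z), m)) w) /\
                  P (trip (snd (of_nat r)) (to_nat (fst (of_nat z), to_nat (m, w))) y)
         end
  | 9 => P (trip r (to_nat (z, y)) 0) /\ forall m, m < y -> exists k, P (trip r (to_nat (z, m)) (S k))
  | _ => y = 0
  end end.

Lemma justN_mono n (P P' : nat -> Prop) : justN n P -> (forall x, P x -> P' x) -> justN n P'.
Proof.
  unfold justN. destruct (of_nat (cdE n)) as [t r].
  destruct t as [|[|[|[|[|[|[|[|[|[|t]]]]]]]]]]; intros H HP; auto.
  - destruct H; auto.
  - destruct H as (w&?&?); eauto.
  - destruct (snd (of_nat (cdZ n))); auto. destruct H as (w&?&?); eauto.
  - destruct H as [H1 H2]; split; auto. intros m hm; destruct (H2 m hm) as [k ?]; eauto.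
Qed.

Definition E0 : nat -> Prop := fun _ => False.
Definition T0 : nat -> Prop := fun _ => True.
Definition ev0 x := evalq E0 T0 (decode (cdE x)) (cdZ x) (cdY x).

Lemma justN_sound n P : justN n P -> (forall x, P x -> ev0 x) -> ev0 n.
Proof.
  unfold justN, ev0. intros H HP. rewrite decode_eq. unfold dstep.
  destruct (of_nat (cdE n)) as [t r] eqn:E.
  destruct t as [|[|[|[|[|[|[|[|[|[|t]]]]]]]]]]; try (rewrite H; constructor; try exact I; try (right; split; auto); fail).
  - destruct H as [H1 H2]. apply HP in H1, H2. unfold ev0 in *.
    rewrite cdE_trip, cdZ_trip, cdY_trip in *.
    rewrite <- (cancel_to_of (cdY n)). rewrite (surjective_pairing (of_nat (cdY n))). constructor; auto.
  - destruct H as (w&H1&H2). apply HP in H1, H2. unfold ev0 in *.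
    rewrite cdE_trip, cdZ_trip, cdY_trip in *. econstructor; eauto.
  - destruct (snd (of_nat (cdZ n))) as [|m] eqn:Ez.
    + apply HP in H. unfold ev0 in *. rewrite cdE_trip, cdZ_trip, cdY_trip in *.
      eapply ev_prim0; eauto. rewrite (surjective_pairing (of_nat (cdZ n))), Ez; reflexivity.
    + destruct H as (w&H1&H2). apply HP in H1, H2. unfold ev0 in *.
      rewrite cdE_trip, cdZ_trip, cdY_trip in *.
      rewrite decode_eq in H1. unfold dstep in H1. rewrite E in H1.
      eapply ev_primS; eauto. rewrite (surjective_pairing (of_nat (cdZ n))), Ez; reflexivity.
  - destruct H as [H1 H2]. apply HP in H1. unfold ev0 in *. rewrite cdE_trip, cdZ_trip, cdY_trip in *.
    constructor; auto. intros m hm. destruct (H2 m hm) as [k Hk]. apply HP in Hk. unfold ev0 in Hk.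
    rewrite cdE_trip, cdZ_trip, cdY_trip in Hk. eauto.
Qed.

Definition prem L i x := exists j, j < i /\ nthN L j = x.
Definition validN L := forall i, i < L -> itl i L <> 0 -> justN (nthN L i) (prem L i).
Definition memN L x := exists i, i < L /\ itl i L <> 0 /\ nthN L i = x.

Lemma itl_0 k : itl k 0 = 0.
Proof. induction k; simpl; auto. unfold itl in *; simpl. rewrite IHk. reflexivity. Qed.
Lemma itl_add a b L : itl (a + b) L = itl a (itl b L).
Proof. unfold itl. apply Nat.iter_add. Qed.
Lemma itl_mono j i L : j <= i -> itl i L <> 0 -> itl j L <> 0.
Proof.
  intros h H E. replace i with ((i - j) + j) in H by lia. rewrite itl_add, E, itl_0 in H. auto.
Qed.
Lemma itl_lt i L : itl i L <> 0 -> i < L \/ True.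
Proof. auto. Qed.

Lemma validN_sound L : validN L -> forall i, i < L -> itl i L <> 0 -> ev0 (nthN L i).
Proof.
  intros HV i. induction i as [i IH] using lt_wf_ind. intros hi hn.
  apply (justN_sound _ _ (HV i hi hn)). intros x (j&hj&<-). apply IH; auto; try lia.
  eapply itl_mono; [|eauto]; lia.
Qed.

Lemma memN_sound L x : validN L -> memN L x -> ev0 x.
Proof. intros HV (i&h1&h2&<-). apply validN_sound; auto. Qed.

Definition validL (l : list nat) := forall i, i < length l -> justN (nth i l 0) (fun x => exists j, j < i /\ nth j l 0 = x).

Lemma validL_app l1 l2 : validL l1 -> validL l2 -> validL (l1 ++ l2).
Proof.
  intros H1 H2 i hi. rewrite length_app in hi.
  destruct (Nat.ltb_spec i (length l1)).
  - rewrite app_nth1 by auto. eapply justN_mono. apply H1; auto.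
    intros x (j&hj&<-). exists j; split; auto. rewrite app_nth1 by lia; auto.
  - rewrite app_nth2 by auto. eapply justN_mono. apply H2; lia.
    intros x (j&hj&<-). exists (length l1 + j); split; [lia|]. rewrite app_nth2 by lia.
    f_equal; lia.
Qed.

Lemma validL_snoc l n : validL l -> justN n (fun x => In x l) -> validL (l ++ n :: nil).
Proof.
  intros H1 H2 i hi. rewrite length_app in hi; simpl in hi.
  destruct (Nat.ltb_spec i (length l)).
  - rewrite app_nth1 by auto. eapply justN_mono. apply H1; auto.
    intros x (j&hj&<-). exists j; split; auto. rewrite app_nth1 by lia; auto.
  - assert (i = length l) by lia. subst. rewrite nth_middle. eapply justN_mono; eauto.
    intros x Hx. destruct (In_nth _ _ 0 Hx) as (j&hj&<-). exists j; split; auto.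
    rewrite app_nth1; auto.
Qed.

Ltac invdec H := rewrite decode_eq in H; unfold dstep in H;
  destruct (of_nat _) as [tt rr] eqn:E in H;
  destruct tt as [|[|[|[|[|[|[|[|[|[|tt]]]]]]]]]]; try discriminate H.

Lemma leaf_valid n : justN n (fun x => In x nil) -> validL (n :: nil).
Proof. intros H. apply (validL_snoc nil n); auto. intros i h; simpl in h; lia. Qed.

Lemma justN_trip e z y P : justN (trip e z y) P =
  match of_nat e with (t, r) =>
  match t with
  | 0 => y = 0 | 1 => y = S z | 2 => y = z | 3 => y = fst (of_nat z) | 4 => y = snd (of_nat z) | 5 => y = 0
  | 6 => P (trip (fst (of_nat r)) z (fst (of_nat y))) /\ P (trip (snd (of_nat r)) z (snd (of_nat y)))
  | 7 => exists w, P (trip (snd (of_nat r)) z w) /\ P (trip (fst (of_nat r)) w y)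
  | 8 => match snd (of_nat z) with
         | 0 => P (trip (fst (of_nat r)) (fst (of_nat z)) y)
         | S m => exists w, P (trip e (to_nat (fst (of_nat z), m)) w) /\
                  P (trip (snd (of_nat r)) (to_nat (fst (of_nat z), to_nat (m, w))) y)
         end
  | 9 => P (trip r (to_nat (z, y)) 0) /\ forall m, m < y -> exists k, P (trip r (to_nat (z, m)) (S k))
  | _ => y = 0
  end end.
Proof. unfold justN. rewrite cdE_trip, cdZ_trip, cdY_trip. reflexivity. Qed.

Lemma mu_lists r z n :
  (forall m, m < n -> exists k l, validL l /\ In (trip r (to_nat (z, m)) (S k)) l) ->
  exists l, validL l /\ forall m, m < n -> exists k, In (trip r (to_nat (z, m)) (S k)) l.
Proof.
  induction n; intros H.
  - exists nil; split. intros i h; simpl in h; lia. intros; lia.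
  - destruct IHn as (l1&V1&I1). intros; apply H; lia.
    destruct (H n) as (k&l2&V2&I2). lia.
    exists (l1 ++ l2); split. apply validL_app; auto.
    intros m hm. destruct (Nat.eq_dec m n); subst.
    + exists k; apply in_or_app; auto.
    + destruct (I1 m) as [k' ?]. lia. exists k'; apply in_or_app; auto.
Qed.

Lemma completeness c z y : evalq E0 T0 c z y ->
  forall e, decode e = c -> exists l, validL l /\ In (trip e z y) l.
Proof.
  intro H. induction H using evind; intros e He.
  all: try (match goal with |- exists l, _ /\ In ?x l => exists (x :: nil) end; split; [apply leaf_valid; rewrite justN_trip;
         invdec He; rewrite E; auto; fail | left; reflexivity]).
  - exists (trip e z v :: nil); split; [apply leaf_valid; rewrite justN_trip| left; reflexivity].
    invdec He. rewrite E. destruct H0 as [[[] _]|[_ ->]]; auto.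
  - invdec He. injection He; intros; subst.
    destruct (IHevalq1 _ eq_refl) as (l1&V1&I1). destruct (IHevalq2 _ eq_refl) as (l2&V2&I2).
    exists ((l1 ++ l2) ++ trip e z (to_nat (a, b)) :: nil). split; [|apply in_or_app; right; left; auto].
    apply validL_snoc. apply validL_app; auto.
    rewrite justN_trip, E. cn. split; apply in_or_app; auto.
  - invdec He. injection He; intros; subst.
    destruct (IHevalq1 _ eq_refl) as (l1&V1&I1). destruct (IHevalq2 _ eq_refl) as (l2&V2&I2).
    exists ((l1 ++ l2) ++ trip e z y :: nil). split; [|apply in_or_app; right; left; auto].
    apply validL_snoc. apply validL_app; auto.
    rewrite justN_trip, E. exists w; split; apply in_or_app; auto.
  - invdec He. injection He; intros; subst.
    destruct (IHevalq _ eq_refl) as (l1&V1&I1).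
    exists (l1 ++ trip e z y :: nil). split; [|apply in_or_app; right; left; auto].
    apply validL_snoc; auto.
    rewrite justN_trip, E, H. cn. auto.
  - destruct (IHevalq1 _ He) as (l1&V1&I1).
    invdec He. injection He; intros; subst.
    destruct (IHevalq2 _ eq_refl) as (l2&V2&I2).
    exists ((l1 ++ l2) ++ trip e z y :: nil). split; [|apply in_or_app; right; left; auto].
    apply validL_snoc. apply validL_app; auto.
    rewrite justN_trip, E, H. cn. exists r; split; apply in_or_app; auto.
  - invdec He. injection He; intros; subst.
    destruct (IHevalq _ eq_refl) as (l1&V1&I1).
    destruct (mu_lists rr z n) as (l2&V2&I2).
    { intros m hm. match goal with Hl : forall m, m < n -> exists k, _ |- _ => destruct (Hl m hm) as (k&_&Hk) end. destruct (Hk _ eq_refl) as (l&?&?). eauto. }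
    exists ((l1 ++ l2) ++ trip e z n :: nil). split; [|apply in_or_app; right; left; auto].
    apply validL_snoc. apply validL_app; auto.
    rewrite justN_trip, E. split. apply in_or_app; auto.
    intros m hm. destruct (I2 m hm) as [k ?]. exists k; apply in_or_app; auto.
Qed.

Lemma tlN_encL l : tlN (encL l) = encL (tl l).
Proof. destruct l; unfold tlN; simpl; auto. cn. auto. Qed.
Lemma itl_encL i : forall l, itl i (encL l) = encL (skipn i l).
Proof.
  induction i; intros l; auto. unfold itl in *; simpl. rewrite IHi, tlN_encL, <- skipn_S_tl. reflexivity.
Qed.
Lemma hdN_encL l : hdN (encL l) = hd 0 l.
Proof. destruct l; unfold hdN; simpl; auto. cn. auto. Qed.
Lemma nthN_encL l i : nthN (encL l) i = nth i l 0.
Proof. unfold nthN. rewrite itl_encL, hdN_encL, nth_hd_skipn. reflexivity. Qed.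
Lemma encL_len l : length l <= encL l.
Proof. induction l; simpl; auto. pose proof (to_nat_non_decreasing a (encL l)). lia. Qed.
Lemma itl_encL_nz l i : itl i (encL l) <> 0 <-> i < length l.
Proof.
  rewrite itl_encL. split.
  - intros H. destruct (Nat.ltb_spec i (length l)); auto. rewrite skipn_all2 in H by auto. simpl in H; lia.
  - intros H. destruct (skipn i l) eqn:E; simpl; try lia.
    apply (f_equal (@length nat)) in E. rewrite length_skipn in E. simpl in E. lia.
Qed.

Lemma validL_N l : validL l -> validN (encL l).
Proof.
  intros H i _ hn. apply itl_encL_nz in hn. rewrite nthN_encL.
  eapply justN_mono. apply H; auto. intros x (j&hj&<-). exists j; split; auto. rewrite nthN_encL; auto.
Qed.
Lemma In_memN l x : In x l -> memN (encL l) x.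
Proof.
  intros Hx. destruct (In_nth _ _ 0 Hx) as (i&hi&<-). exists i. split.
  pose proof (encL_len l); lia. split. apply itl_encL_nz; auto. apply nthN_encL.
Qed.

Theorem phi_cert e z : (exists y, phi e z y) <-> exists L, validN L /\ exists y, memN L (trip e z y).
Proof.
  split.
  - intros (y&Hy). destruct (completeness _ _ _ Hy e eq_refl) as (l&V&I).
    exists (encL l); split. apply validL_N; auto. exists y. apply In_memN; auto.
  - intros (L&V&y&M). exists y. pose proof (memN_sound _ _ V M) as H. unfold ev0 in H.
    rewrite cdE_trip, cdZ_trip, cdY_trip in H. exact H.
Qed.

Section D.
Variable b : nat -> nat.
Lemma dE_var n env : den b (EVar n) env = nth n env 0. Proof. reflexivity. Qed.
Lemma dE_const n env : den b (EConst n) env = n. Proof. reflexivity. Qed.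
Lemma dE_succ e env : den b (ESucc e) env = S (den b e env). Proof. reflexivity. Qed.
Lemma dE_pair x y env : den b (EPair x y) env = to_nat (den b x env, den b y env). Proof. reflexivity. Qed.
Lemma dE_fst e env : den b (EFst e) env = fst (of_nat (den b e env)). Proof. reflexivity. Qed.
Lemma dE_snd e env : den b (ESnd e) env = snd (of_nat (den b e env)). Proof. reflexivity. Qed.
Lemma dE_add x y env : den b (EAdd x y) env = den b x env + den b y env. Proof. reflexivity. Qed.
Lemma dE_sub x y env : den b (ESub x y) env = den b x env - den b y env. Proof. reflexivity. Qed.
Lemma dE_if c x y env : den b (EIf c x y) env = ite (den b c env) (den b x env) (den b y env). Proof. reflexivity. Qed.
End D.

Lemma ite_b2n c x y : ite (b2n c) (b2n x) (b2n y) = b2n (if c then x else y).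
Proof. destruct c; reflexivity. Qed.

Definition nthE (L i : expr) : expr :=
  EFst (ESub (EIter i L (ESnd (ESub (EVar 0) (EConst 1)))) (EConst 1)).
Lemma dE_nth b L i env : den b (nthE L i) env = nthN (den b L env) (den b i env).
Proof.
  unfold nthE, nthN, hdN. rewrite dE_fst, dE_sub, den_iter. f_equal. f_equal.
  rewrite Nat.sub_1_r. f_equal.
  induction (den b i env); simpl. reflexivity.
  rewrite IHn. unfold itl. simpl. unfold tlN. rewrite Nat.sub_1_r. reflexivity.
Qed.
Definition itlE (L i : expr) : expr := EIter i L (ESnd (ESub (EVar 0) (EConst 1))).
Lemma dE_itl b L i env : den b (itlE L i) env = itl (den b i env) (den b L env).
Proof.
  unfold itlE. rewrite den_iter.
  induction (den b i env); simpl. reflexivity.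
  rewrite IHn. unfold itl. simpl. unfold tlN. rewrite Nat.sub_1_r. reflexivity.
Qed.

Definition tripE a x y := EPair a (EPair x y).
Lemma dE_trip b a x y env : den b (tripE a x y) env = trip (den b a env) (den b x env) (den b y env).
Proof. reflexivity. Qed.

Definition premE (L i x : expr) := EEx i (EEq (nthE (sh1 L) (EVar 0)) (sh1 x)).
Definition premB L i x := exb i (fun j => nthN L j =? x).

Lemma nth_0c (x : nat) l d : nth 0 (x :: l) d = x. Proof. reflexivity. Qed.
Lemma nth_1c (x y : nat) l d : nth 1 (x :: y :: l) d = y. Proof. reflexivity. Qed.
Hint Rewrite nth_0c nth_1c dE_pair dE_var dE_const dE_succ dE_fst dE_snd dE_add dE_sub dE_if dE_nth dE_itl dE_trip
  den_and den_or den_nz den_isz den_eq den_ex den_all den_sh1 ite_b2n nz_b2n : dd.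

Lemma dE_prem b L i x env : den b (premE L i x) env = b2n (premB (den b L env) (den b i env) (den b x env)).
Proof. unfold premE, premB. rewrite_strat (topdown (hints dd)). simpl. reflexivity. Qed.
Hint Rewrite dE_prem : dd.

Definition JE (L i : expr) : expr :=
  let n := nthE L i in
  let e := EFst n in let t := EFst e in let r := ESnd e in let e1 := EFst r in let e2 := ESnd r in
  let z := EFst (ESnd n) in let y := ESnd (ESnd n) in
  let tg k := EEq t (EConst k) in
  EIf (tg 0) (EEq y (EConst 0))
 (EIf (tg 1) (EEq y (ESucc z))
 (EIf (tg 2) (EEq y z)
 (EIf (tg 3) (EEq y (EFst z))
 (EIf (tg 4) (EEq y (ESnd z))
 (EIf (tg 5) (EEq y (EConst 0))
 (EIf (tg 6) (EAnd (premE L i (tripE e1 z (EFst y))) (premE L i (tripE e2 z (ESnd y))))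
 (EIf (tg 7) (EEx i (EAnd (EEq (EFst (nthE (sh1 L) (EVar 0))) (sh1 e2))
                    (EAnd (EEq (EFst (ESnd (nthE (sh1 L) (EVar 0)))) (sh1 z))
                          (premE (sh1 L) (sh1 i) (tripE (sh1 e1) (ESnd (ESnd (nthE (sh1 L) (EVar 0)))) (sh1 y))))))
 (EIf (tg 8) (EIf (EEq (ESnd z) (EConst 0)) (premE L i (tripE e1 (EFst z) y))
       (EEx i (EAnd (EEq (EFst (nthE (sh1 L) (EVar 0))) (sh1 e))
                (EAnd (EEq (EFst (ESnd (nthE (sh1 L) (EVar 0)))) (EPair (sh1 (EFst z)) (ESub (sh1 (ESnd z)) (EConst 1))))
                  (premE (sh1 L) (sh1 i) (tripE (sh1 e2)
                     (EPair (sh1 (EFst z)) (EPair (ESub (sh1 (ESnd z)) (EConst 1)) (ESnd (ESnd (nthE (sh1 L) (EVar 0))))))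
                     (sh1 y)))))))
 (EIf (tg 9) (EAnd (premE L i (tripE r (EPair z y) (EConst 0)))
        (EAll y (EEx (sh1 i) (EAnd (EEq (EFst (nthE (sh1 (sh1 L)) (EVar 0))) (sh1 (sh1 r)))
             (EAnd (EEq (EFst (ESnd (nthE (sh1 (sh1 L)) (EVar 0)))) (EPair (sh1 (sh1 z)) (EVar 1)))
                   (ENz (ESnd (ESnd (nthE (sh1 (sh1 L)) (EVar 0))))))))))
 (EEq y (EConst 0))))))))))).

Definition justB (L i : nat) : bool :=
  let n := nthN L i in
  let e := cdE n in let t := fst (of_nat e) in let r := snd (of_nat e) in
  let e1 := fst (of_nat r) in let e2 := snd (of_nat r) in
  let z := cdZ n in let y := cdY n in
  if t =? 0 then y =? 0 else
  if t =? 1 then y =? S z else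
  if t =? 2 then y =? z else
  if t =? 3 then y =? fst (of_nat z) else
  if t =? 4 then y =? snd (of_nat z) else
  if t =? 5 then y =? 0 else
  if t =? 6 then premB L i (trip e1 z (fst (of_nat y))) && premB L i (trip e2 z (snd (of_nat y))) else
  if t =? 7 then exb i (fun j => (cdE (nthN L j) =? e2) && ((cdZ (nthN L j) =? z) &&
                     premB L i (trip e1 (cdY (nthN L j)) y))) else
  if t =? 8 then (if snd (of_nat z) =? 0 then premB L i (trip e1 (fst (of_nat z)) y) else
       exb i (fun j => (cdE (nthN L j) =? e) && ((cdZ (nthN L j) =? to_nat (fst (of_nat z), snd (of_nat z) - 1)) &&
          premB L i (trip e2 (to_nat (fst (of_nat z), to_nat (snd (of_nat z) - 1, cdY (nthN L j)))) y)))) else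
  if t =? 9 then premB L i (trip r (to_nat (z, y)) 0) &&
       allb y (fun m => exb i (fun j => (cdE (nthN L j) =? r) && ((cdZ (nthN L j) =? to_nat (z, m)) && nz (cdY (nthN L j)))))
  else y =? 0.

Lemma dE_JE b L i env : den b (JE L i) env = b2n (justB (den b L env) (den b i env)).
Proof.
  unfold JE. cbv zeta. rewrite_strat (topdown (hints dd)).
  unfold justB, cdE, cdZ, cdY, trip. cbv zeta. reflexivity.
Qed.

Lemma premB_spec L i x : premB L i x = true <-> prem L i x.
Proof.
  unfold premB, prem. rewrite exb_spec. split; intros (j&h&H); exists j; split; auto; apply Nat.eqb_eq; auto.
Qed.

Lemma nthj_trip L j e z : (cdE (nthN L j) =? e) && (cdZ (nthN L j) =? z) = true ->
  nthN L j = trip e z (cdY (nthN L j)).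
Proof.
  rewrite Bool.andb_true_iff, !Nat.eqb_eq. intros [<- <-]. symmetry; apply trip_cd.
Qed.

Lemma exb_node L i e z (F : nat -> bool) (G : nat -> Prop) :
  (forall w, F w = true <-> G w) ->
  (exb i (fun j => (cdE (nthN L j) =? e) && ((cdZ (nthN L j) =? z) && F (cdY (nthN L j)))) = true <->
   exists w, prem L i (trip e z w) /\ G w).
Proof.
  intros HF. rewrite exb_spec. split.
  - intros (j&hj&H). rewrite Bool.andb_assoc, Bool.andb_true_iff in H. destruct H as [H1 H2].
    exists (cdY (nthN L j)). split. exists j; split; auto. apply (nthj_trip L j e z); auto. apply HF; auto.
  - intros (w&(j&hj&Hj)&Hw). exists j; split; auto.
    rewrite Hj, cdE_trip, cdZ_trip, cdY_trip, !Nat.eqb_refl. simpl. apply HF; auto.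
Qed.

Lemma justB_spec L i : justB L i = true <-> justN (nthN L i) (prem L i).
Proof.
  unfold justB, justN. cbv zeta. set (n := nthN L i).
  destruct (of_nat (cdE n)) as [t r] eqn:E. cbn [fst snd].
  destruct t as [|[|[|[|[|[|[|[|[|[|t]]]]]]]]]]; cbn -[premB exb allb nz]; try apply Nat.eqb_eq.
  - rewrite Bool.andb_true_iff, !premB_spec. reflexivity.
  - apply (exb_node L i _ _ (fun w => premB L i (trip (fst (of_nat r)) w (cdY n)))).
    intros; apply premB_spec.
  - destruct (snd (of_nat (cdZ n))) as [|m]; cbn -[premB exb allb nz]. apply premB_spec.
    replace (m - 0) with m by lia.
    apply (exb_node L i _ _ (fun w => premB L i (trip (snd (of_nat r)) (to_nat (fst (of_nat (cdZ n)), to_nat (m, w))) (cdY n)))).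
    intros; apply premB_spec.
  - rewrite Bool.andb_true_iff, premB_spec, allb_spec. apply and_iff_compat_l.
    assert (HN : forall w, nz w = true <-> w <> 0) by (intros [|w]; unfold nz; simpl; split; congruence).
    split; intros H m hm; specialize (H m hm).
    + apply (exb_node L i _ _ nz (fun w => w <> 0) HN) in H. destruct H as (w&Hp&Hw).
      destruct w; [congruence|]. eauto.
    + apply (exb_node L i _ _ nz (fun w => w <> 0) HN). destruct H as (k&Hk). exists (S k); split; auto.
Qed.

Hint Rewrite dE_JE : dd.
Definition validE L := EAll L (EOr (EIsZ (itlE (sh1 L) (EVar 0))) (JE (sh1 L) (EVar 0))).
Definition memE L e z := EEx L (EAnd (ENz (itlE (sh1 L) (EVar 0)))
   (EAnd (EEq (EFst (nthE (sh1 L) (EVar 0))) (sh1 e)) (EEq (EFst (ESnd (nthE (sh1 L) (EVar 0)))) (sh1 z)))).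
Definition StE e z t := EEx (ESucc t) (EAnd (validE (EVar 0)) (memE (EVar 0) (sh1 e) (sh1 z))).

Definition validB L := allb L (fun i => negb (nz (itl i L)) || justB L i).
Definition memB L e z := exb L (fun i => nz (itl i L) && ((fst (of_nat (nthN L i)) =? e) && (fst (of_nat (snd (of_nat (nthN L i)))) =? z))).
Definition StB e z t := exb (S t) (fun L => validB L && memB L e z).

Lemma dE_St b e z t env : den b (StE e z t) env = b2n (StB (den b e env) (den b z env) (den b t env)).
Proof.
  unfold StE, validE, memE. rewrite_strat (topdown (hints dd)). reflexivity.
Qed.

Lemma validB_spec L : validB L = true <-> validN L.
Proof.
  unfold validB, validN. rewrite allb_spec. split; intros H i hi; specialize (H i hi).
  - intros hn. apply justB_spec. rewrite Bool.orb_true_iff in H. destruct H as [H|H]; auto.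
    unfold nz in H. destruct (itl i L); simpl in H; congruence.
  - rewrite Bool.orb_true_iff. destruct (itl i L) eqn:E. left; reflexivity.
    right. apply justB_spec. apply H. congruence.
Qed.

Lemma memB_spec L e z : memB L e z = true <-> exists y, memN L (trip e z y).
Proof.
  unfold memB, memN. rewrite exb_spec. split.
  - intros (i&hi&H). rewrite !Bool.andb_true_iff, !Nat.eqb_eq in H. destruct H as (H1&H2&H3).
    exists (cdY (nthN L i)), i. repeat split; auto.
    unfold nz in H1; destruct (itl i L); simpl in H1; congruence.
    rewrite <- H2, <- H3. symmetry. apply trip_cd.
  - intros (y&i&hi&hn&H). exists i; split; auto. rewrite H.
    rewrite !Bool.andb_true_iff, !Nat.eqb_eq. fold (cdE (trip e z y)). fold (cdZ (trip e z y)).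
    rewrite cdE_trip, cdZ_trip. repeat split; auto.
    unfold nz; destruct (itl i L); simpl; congruence.
Qed.

Definition StP e z t := exists L, L <= t /\ validN L /\ exists y, memN L (trip e z y).
Lemma StB_spec e z t : StB e z t = true <-> StP e z t.
Proof.
  unfold StB, StP. rewrite exb_spec. split.
  - intros (L&h&H). rewrite Bool.andb_true_iff, validB_spec, memB_spec in H. exists L; split; [lia|auto].
  - intros (L&h&H). exists L; split; [lia|]. rewrite Bool.andb_true_iff, validB_spec, memB_spec. auto.
Qed.

Lemma StP_mono e z t t' : t <= t' -> StP e z t -> StP e z t'.
Proof. intros h (L&h1&H). exists L; split; [lia|auto]. Qed.

Lemma StP_phi e z : (exists t, StP e z t) <-> exists y, phi e z y.
Proof.
  rewrite phi_cert. split.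
  - intros (t&L&_&H). eauto.
  - intros (L&H). exists L, L. split; auto.
Qed.

Lemma StB_01 e z t : StB e z t = false <-> ~ StP e z t.
Proof. rewrite <- StB_spec. destruct (StB e z t); split; congruence. Qed.

Lemma noor_StE : noor (StE (EVar 0) (EVar 1) (EVar 2)).
Proof. apply noorb_ok. vm_compute. reflexivity. Qed.

Lemma canon_lt m z : canon m z -> z < m.
Proof.
  unfold canon. intros H. destruct (Nat.ltb_spec z m); auto.
  destruct m. rewrite Nat.bits_0 in H; discriminate.
  rewrite Nat.bits_above_log2 in H. discriminate. pose proof (Nat.log2_lt_lin (S m)). lia.
Qed.

Fixpoint subst (c X : code) : code :=
  match c with
  | COracle => X
  | CPair f g => CPair (subst f X) (subst g X)
  | CComp f g => CComp (subst f X) (subst g X)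
  | CPrimRec f g => CPrimRec (subst f X) (subst g X)
  | CMu f => CMu (subst f X)
  | c => c
  end.

Lemma subst_ok A Q c z y X : evalq A Q c z y ->
  (forall q v, Q q -> charf A q v -> evalq E0 T0 X q v) -> evalq E0 T0 (subst c X) z y.
Proof.
  intros H HX. induction H using evind; simpl; try (econstructor; eauto; fail).
  all: try (eapply ev_primS; eauto; fail).
  all: try (apply HX; auto; fail).
  constructor; auto. intros m hm. destruct (H0 m hm) as (k&_&?); eauto.
Qed.

Fixpoint substI (c : code) (n : nat) : nat :=
  match c with
  | COracle => n
  | CPair f g => to_nat (6, to_nat (substI f n, substI g n))
  | CComp f g => to_nat (7, to_nat (substI f n, substI g n))
  | CPrimRec f g => to_nat (8, to_nat (substI f n, substI g n))
  | CMu f => to_nat (9, substI f n)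
  | c => enc c
  end.

Lemma dec_substI c n : decode (substI c n) = subst c (decode n).
Proof.
  induction c; simpl; try apply dec_enc; auto.
  all: rewrite ?dec_pair, ?dec_comp, ?dec_prim, ?dec_mu; congruence.
Qed.

Fixpoint substE (c : code) : expr :=
  match c with
  | COracle => EVar 0
  | CPair f g => EPair (EConst 6) (EPair (substE f) (substE g))
  | CComp f g => EPair (EConst 7) (EPair (substE f) (substE g))
  | CPrimRec f g => EPair (EConst 8) (EPair (substE f) (substE g))
  | CMu f => EPair (EConst 9) (substE f)
  | c => EConst (enc c)
  end.

Lemma substE_noor c : noor (substE c).
Proof. induction c; simpl; auto. Qed.
Lemma substE_den c n : d0 (substE c) (n :: nil) = substI c n.
Proof. induction c; simpl; auto; unfold d0 in *; simpl; congruence. Qed.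

Definition onesE := EIter (EVar 0) (EConst 0) (ESucc (EAdd (EVar 0) (EVar 0))).
Lemma onesE_den m : d0 onesE (m :: nil) = Nat.ones m.
Proof.
  unfold d0, onesE. rewrite den_iter.
  assert (H : forall k, iterv (fun _ => 0) (EConst 0) (ESucc (EAdd (EVar 0) (EVar 0))) (m :: nil) k = Nat.ones k).
  { induction k. reflexivity. simpl iterv. simpl den. rewrite IHk. rewrite !Nat.ones_equiv. simpl.
    pose proof (Nat.pow_nonzero 2 k). lia. }
  apply H.
Qed.

Definition env1 := CPair CId CZero.
Lemma env1_spec A Q x : evalq A Q env1 x (encE (x :: nil)).
Proof. apply ev_pair' with x 0; constructor. Qed.

Section Dir1.
Variables (A : nat -> Prop) (ew ef0 : nat) (f0 : nat -> nat).
Hypothesis Hf0 : forall x, phi ef0 x (f0 x).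
Hypothesis Hw : forall x, exists y, charf K x y /\ evalq A (fun q => q < f0 x) (decode ew) x y.

Definition c0 := decode ew.
Definition Pe (e : nat) := CMu (CComp (subst c0 (decode e)) CFst).
Definition gI (e : nat) := to_nat (9, to_nat (7, to_nat (substI c0 e, enc CFst))).
Lemma dec_gI e : decode (gI e) = Pe e.
Proof. unfold gI, Pe. rewrite dec_mu, dec_comp, dec_substI, dec_enc. reflexivity. Qed.

Definition gE := EPair (EConst 9) (EPair (EConst 7) (EPair (substE c0) (EConst (enc CFst)))).
Lemma gE_den e : d0 gE (e :: nil) = gI e.
Proof. unfold gE, gI, d0. simpl den. fold (d0 (substE c0) (e :: nil)). rewrite substE_den. reflexivity. Qed.
Lemma gE_noor : noor gE.
Proof. simpl. pose proof (substE_noor c0). tauto. Qed.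

Definition Fc := CComp (compile onesE) (CPair (CComp (decode ef0) (CComp (compile gE) env1)) CZero).
Lemma Fc_spec e : phi (enc Fc) e (Nat.ones (f0 (gI e))).
Proof.
  unfold phi, phiA. rewrite dec_enc. unfold Fc.
  econstructor.
  - apply ev_pair' with (f0 (gI e)) 0; [|constructor|reflexivity].
    apply ev_comp with (gI e); [|apply Hf0].
    apply ev_comp with (encE (e :: nil)); [apply env1_spec|].
    rewrite <- (gE_den e). apply compile_noor. apply gE_noor.
  - rewrite <- onesE_den. change (to_nat (f0 (gI e), 0)) with (encE (f0 (gI e) :: nil)). apply compile_noor. simpl; auto.
Qed.

Lemma dir1 : exists f : nat -> nat, computable f /\
    forall e,
      (forall z, canon (f e) z -> exists y, phi e z y) ->
      exists z, canon (f e) z /\ exists y, phi e z y /\ ~ charf A z y.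
Proof.
  exists (fun e => Nat.ones (f0 (gI e))). split. exists (enc Fc). apply Fc_spec.
  intros e Htot. apply NNPP. intros Hno.
  assert (Hag : forall z y, z < f0 (gI e) -> phi e z y -> charf A z y).
  { intros z y hz Hy. apply NNPP. intros Hc. apply Hno. exists z. split.
    unfold canon. apply Nat.ones_spec_low; auto. eauto. }
  set (x := gI e).
  destruct (Hw x) as (y0&HK&Hev).
  assert (Hsim : evalq E0 T0 (subst c0 (decode e)) x y0).
  { apply (subst_ok A (fun q => q < f0 x)); auto.
    intros q v hq Hv. destruct (Htot q) as (y&Hy). unfold canon. apply Nat.ones_spec_low; auto.
    pose proof (Hag q y hq Hy). rewrite (charf_det _ _ _ _ Hv H). apply Hy. }
  destruct HK as [[HK ->]|[HK ->]].
  - destruct HK as (n&Hn). unfold phi, phiA in Hn. fold x in Hn. unfold x in Hn.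
    rewrite dec_gI in Hn. inversion Hn; subst.
    match goal with H : evalq _ _ (CComp _ CFst) _ 0 |- _ => inversion H; subst end.
    match goal with H : evalq _ _ CFst _ _ |- _ => inversion H; subst end.
    match goal with H : evalq _ _ (subst _ _) _ 0 |- _ => rename H into H6 end.
    rewrite cancel_of_to in H6. simpl in H6.
    pose proof (evalq_det _ _ _ _ _ H6 _ _ Hsim). discriminate.
  - apply HK. exists 0. unfold phi, phiA. unfold x. rewrite dec_gI. constructor.
    + econstructor. constructor. rewrite cancel_of_to. exact Hsim.
    + intros; lia.
Qed.
End Dir1.

Lemma min_ex (P : nat -> Prop) : (exists n, P n) -> exists n, P n /\ forall m, m < n -> ~ P m.
Proof.
  intros [n Hn]. induction n as [n IH] using lt_wf_ind.
  destruct (classic (exists m, m < n /\ P m)) as [(m&hm&Pm)|H].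
  - apply (IH m hm Pm).
  - exists n; split; auto. intros m hm Pm; apply H; eauto.
Qed.

Fixpoint deor (c : code) : code :=
  match c with
  | COracle => CZero
  | CPair f g => CPair (deor f) (deor g)
  | CComp f g => CComp (deor f) (deor g)
  | CPrimRec f g => CPrimRec (deor f) (deor g)
  | CMu f => CMu (deor f)
  | c => c
  end.

Lemma deor_ok A Q c z y : evalq E0 T0 c z y -> evalq A Q (deor c) z y.
Proof.
  intros H. induction H using evind; simpl; try (econstructor; eauto; fail).
  all: try (eapply ev_primS; eauto; fail).
  - destruct H0 as [[[] _]|[_ ->]]. constructor.
  - constructor; auto. intros m hm. destruct (H0 m hm) as (k&_&?); eauto.
Qed.

Lemma noor_shift e : forall c d, noor e -> noor (shift c d e).
Proof. induction e; simpl; intuition. Qed.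

Definition env2 := CPair CFst (CPair CSnd CZero).
Lemma env2_spec A Q a b : evalq A Q env2 (to_nat (a, b)) (encE (a :: b :: nil)).
Proof.
  apply ev_pair' with a (to_nat (b, 0)). apply ev_fst'; cn; auto.
  apply ev_pair' with b 0. apply ev_snd'; cn; auto. constructor. reflexivity. reflexivity.
Qed.
Definition env3 := CPair (CComp CFst CFst) (CPair (CComp CSnd CFst) (CPair CSnd CZero)).
Lemma env3_spec A Q a b c : evalq A Q env3 (to_nat (to_nat (a, b), c)) (encE (a :: b :: c :: nil)).
Proof.
  apply ev_pair' with a (to_nat (b, to_nat (c, 0))).
  apply ev_comp with (to_nat (a, b)); apply ev_fst'; cn; auto.
  apply ev_pair' with b (to_nat (c, 0)).
  apply ev_comp with (to_nat (a, b)). apply ev_fst'; cn; auto. apply ev_snd'; cn; auto.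
  apply ev_pair' with c 0. apply ev_snd'; cn; auto. constructor. reflexivity. reflexivity. reflexivity.
Qed.

Lemma dE_orac b e env : den b (EOracle e) env = b (den b e env). Proof. reflexivity. Qed.
Lemma nth_Sc (x : nat) n l d : nth (S n) (x :: l) d = nth n l d. Proof. reflexivity. Qed.
Hint Rewrite dE_orac nth_Sc dE_St : dd.

Lemma StE_noor e z t : noor e -> noor z -> noor t -> noor (StE e z t).
Proof.
  intros. unfold StE, validE, memE, JE, EEx, EAll, EAnd, EOr, ENz, EEq, premE, nthE, itlE, tripE, ETrue.
  cbv zeta. simpl. repeat split; auto; apply noor_shift; auto; simpl; repeat split; auto;
  repeat (apply noor_shift; simpl; repeat split; auto).
Qed.

Definition bA (A : nat -> Prop) (z : nat) : nat := if excluded_middle_informative (A z) then 1 else 0.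
Lemma bA_charf A z : charf A z (bA A z).
Proof. unfold bA, charf. destruct (excluded_middle_informative (A z)); auto. Qed.

Section Dir2.
Variables (A : nat -> Prop) (eA ef : nat) (f : nat -> nat).
Hypothesis HA : forall x, A x <-> exists y, phi eA x y.
Hypothesis Hf : forall e, phi ef e (f e).
Hypothesis HD : forall e,
      (forall z, canon (f e) z -> exists y, phi e z y) ->
      exists z, canon (f e) z /\ exists y, phi e z y /\ ~ charf A z y.

Definition SxE := EIsZ (StE (EVar 0) (EVar 0) (EVar 1)).
Definition Sx := CMu (CComp (compile SxE) env2).
Definition BodyE := StE (EConst eA) (EVar 0) (EVar 1).
Definition Body := CComp (compile BodyE) (CPair CFst (CPair (CComp Sx CSnd) CZero)).
Definition Qx x := CComp Body (CPair CId (cconst x)).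
Definition hI x := enc (Qx x).

Lemma SxE_noor : noor SxE.
Proof. apply noorb_ok; vm_compute; reflexivity. Qed.
Lemma BodyE_noor : noor BodyE.
Proof. apply noorb_ok; vm_compute; reflexivity. Qed.
Lemma SxE_den x t : d0 SxE (x :: t :: nil) = isz (b2n (StB x x t)).
Proof. unfold SxE, d0. rewrite_strat (topdown (hints dd)). destruct (StB x x t); reflexivity. Qed.
Lemma BodyE_den z s : d0 BodyE (z :: s :: nil) = b2n (StB eA z s).
Proof. unfold BodyE, d0. rewrite_strat (topdown (hints dd)). reflexivity. Qed.

Lemma Sx_spec Q x s : StP x x s -> (forall t, t < s -> ~ StP x x t) -> evalq E0 Q Sx x s.
Proof.
  intros H1 H2. unfold Sx. constructor.
  - econstructor. apply env2_spec. rewrite <- (StB_spec) in H1.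
    replace 0 with (d0 SxE (x :: s :: nil)). apply compile_noor, SxE_noor.
    rewrite SxE_den, H1. reflexivity.
  - intros t ht. exists 0. econstructor. apply env2_spec.
    replace 1 with (d0 SxE (x :: t :: nil)). apply compile_noor, SxE_noor.
    rewrite SxE_den. assert (E : StB x x t = false) by (apply StB_01; auto). rewrite E; reflexivity.
Qed.

Lemma Qx_spec x s z : StP x x s -> (forall t, t < s -> ~ StP x x t) -> phi (hI x) z (b2n (StB eA z s)).
Proof.
  intros H1 H2. unfold phi, phiA, hI. rewrite dec_enc. unfold Qx.
  apply ev_comp with (to_nat (z, x)).
  - apply ev_pair' with z x. constructor. apply cconst_spec. reflexivity.
  - unfold Body. apply ev_comp with (encE (z :: s :: nil)).
    + apply ev_pair' with z (to_nat (s, 0)). apply ev_fst'; cn; auto.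
      apply ev_pair' with s 0. apply ev_comp with x. apply ev_snd'; cn; auto. apply Sx_spec; auto.
      constructor. reflexivity. reflexivity.
    + rewrite <- BodyE_den. apply compile_noor, BodyE_noor.
Qed.

Definition ccE := EIter (EVar 0) (EConst (enc CZero)) (EPair (EConst 7) (EPair (EConst (enc CSucc)) (EVar 0))).
Definition hE := EPair (EConst 7) (EPair (EConst (enc Body)) (EPair (EConst 6) (EPair (EConst (enc CId)) ccE))).
Lemma ccE_den x : d0 ccE (x :: nil) = enc (cconst x).
Proof.
  unfold ccE, d0. rewrite den_iter.
  assert (forall k, iterv (fun _ => 0) (EConst (enc CZero)) (EPair (EConst 7) (EPair (EConst (enc CSucc)) (EVar 0))) (x :: nil) k = enc (cconst k)).
  { induction k. reflexivity. simpl iterv. simpl den. simpl enc in IHk. rewrite IHk. reflexivity. }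
  apply H.
Qed.
Lemma hE_den x : d0 hE (x :: nil) = hI x.
Proof.
  change (d0 hE (x :: nil)) with (to_nat (7, to_nat (enc Body, to_nat (6, to_nat (enc CId, d0 ccE (x :: nil)))))).
  rewrite ccE_den. reflexivity.
Qed.
Lemma hE_noor : noor hE.
Proof. simpl; tauto. Qed.

Definition f0 x := f (hI x).
Definition Fb := CComp (decode ef) (CComp (compile hE) env1).
Definition Mc := CComp (deor (decode ef)) (CComp (compile hE) env1).
Lemma Fb_spec x : phi (enc Fb) x (f0 x).
Proof.
  unfold phi, phiA. rewrite dec_enc. unfold Fb. apply ev_comp with (hI x); [|apply Hf].
  apply ev_comp with (encE (x :: nil)). apply env1_spec. rewrite <- hE_den. apply compile_noor, hE_noor.
Qed.
Lemma Mc_spec Q x : evalq A Q Mc x (f0 x).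
Proof.
  unfold Mc. apply ev_comp with (hI x); [|apply deor_ok, Hf].
  apply ev_comp with (encE (x :: nil)). apply env1_spec. rewrite <- hE_den. apply compile_noor, hE_noor.
Qed.

Definition AGE := EAll (EVar 1) (EEq (StE (EConst eA) (EVar 0) (EVar 3)) (EOracle (EVar 0))).
Definition goodB m t := allb m (fun z => b2n (StB eA z t) =? bA A z).
Lemma AGE_den x m t : den (bA A) (EIsZ AGE) (x :: m :: t :: nil) = b2n (negb (goodB m t)).
Proof. unfold AGE, goodB. rewrite_strat (topdown (hints dd)). reflexivity. Qed.

Lemma StE0_noor : noor (StE (EConst eA) (EVar 0) (EVar 3)).
Proof. apply noorb_ok; vm_compute; reflexivity. Qed.

Lemma AGE_ok (Q : nat -> Prop) x m t : (forall q, q < m -> Q q) -> ok A Q (bA A) (EIsZ AGE) (x :: m :: t :: nil).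
Proof.
  intros HQ. unfold AGE, EAll, EEx. cbn [ok]. split; [exact I|]. split; [exact I|].
  intros k hk. cbn [den nth] in hk. cbn [ok]. split; [exact I|]. split; [exact I|].
  unfold ENz, sh1, EEq. cbn [shift ok]. cbn [Nat.ltb Nat.leb Nat.add].
  assert (Hs : ok A Q (bA A) (shift 0 1 (StE (EConst eA) (EVar 0) (EVar 3)))
     (iterv (bA A) (EConst 0) (EIf (EVar 0) ETrue (ENz (sh1 (EIsZ (EEq (StE (EConst eA) (EVar 0) (EVar 3)) (EOracle (EVar 0)))))))
        (x :: m :: t :: nil) k :: k :: x :: m :: t :: nil)).
  { apply noor_ok. apply noor_shift. apply StE0_noor. }
  assert (Ho : ok A Q (bA A) (EOracle (EVar 1))
     (iterv (bA A) (EConst 0) (EIf (EVar 0) ETrue (ENz (sh1 (EIsZ (EEq (StE (EConst eA) (EVar 0) (EVar 3)) (EOracle (EVar 0)))))))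
        (x :: m :: t :: nil) k :: k :: x :: m :: t :: nil)).
  { cbn [ok den nth]. split; [exact I|]. split. apply HQ; auto. apply bA_charf. }
  tauto.
Qed.

Definition Gc := CComp (compile (EIsZ AGE)) env3.
Lemma Gc_spec (Q : nat -> Prop) x m t : (forall q, q < m -> Q q) ->
  evalq A Q Gc (to_nat (to_nat (x, m), t)) (b2n (negb (goodB m t))).
Proof.
  intros HQ. unfold Gc. apply ev_comp with (encE (x :: m :: t :: nil)). apply env3_spec.
  rewrite <- (AGE_den x). apply compile_ok. apply AGE_ok; auto.
Qed.

Definition OutE := StE (EVar 0) (EVar 0) (EVar 1).
Lemma OutE_noor : noor OutE.
Proof. apply noorb_ok; vm_compute; reflexivity. Qed.
Lemma OutE_den x t : d0 OutE (x :: t :: nil) = b2n (StB x x t).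
Proof. unfold OutE, d0. rewrite_strat (topdown (hints dd)). reflexivity. Qed.

Definition T0c := CComp (CMu Gc) (CPair CId Mc).
Definition W := CComp (compile OutE) (CPair CId (CPair T0c CZero)).

Lemma good_exists m : exists T, goodB m T = true.
Proof.
  assert (H : exists T, forall z, z < m -> A z -> StP eA z T).
  { induction m. exists 0; intros; lia.
    destruct IHm as [T1 H1]. destruct (classic (A m)) as [Am|Am].
    - destruct (proj2 (StP_phi eA m) (proj1 (HA m) Am)) as [tz Hz].
      exists (Nat.max T1 tz). intros z hz Az. destruct (Nat.eq_dec z m).
      + subst. apply (StP_mono _ _ tz); auto; lia.
      + apply (StP_mono _ _ T1); auto. lia. apply H1; auto; lia.
    - exists T1. intros z hz Az. destruct (Nat.eq_dec z m). subst; contradiction. apply H1; auto; lia. }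
  destruct H as [T H]. exists T. unfold goodB. apply allb_spec. intros z hz. apply Nat.eqb_eq.
  unfold bA. destruct (excluded_middle_informative (A z)) as [Az|Az].
  - rewrite (proj2 (StB_spec _ _ _) (H z hz Az)). reflexivity.
  - destruct (StB eA z T) eqn:E; auto. apply StB_spec in E. exfalso. apply Az, HA, StP_phi. eauto.
Qed.

Lemma dir2_x x : exists y, charf K x y /\ evalq A (fun q => q < f0 x) W x y.
Proof.
  set (m := f0 x).
  destruct (min_ex (fun t => goodB m t = true) (good_exists m)) as (t0&Ht0&Hmin).
  exists (b2n (StB x x t0)). split.
  - destruct (StB x x t0) eqn:E.
    + left; split; auto. apply StB_spec in E. unfold K. apply StP_phi. eauto.
    + right; split; auto. intros HK. apply StP_phi in HK.
      destruct (min_ex _ HK) as (s0&Hs0&Hsmin).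
      assert (HQ := fun z => Qx_spec x s0 z Hs0 Hsmin).
      assert (Htot : forall z, canon (f (hI x)) z -> exists y, phi (hI x) z y).
      { intros z _. exists (b2n (StB eA z s0)). apply HQ. }
      destruct (HD (hI x) Htot) as (z&Hz&y&Hy&Hc).
      pose proof (evalq_det _ _ _ _ _ Hy _ _ (HQ z)) as Ey. subst y.
      assert (Hzm : z < m) by (apply canon_lt; auto).
      destruct (StB eA z s0) eqn:Es.
      * apply Hc. left; split; auto. apply HA, StP_phi. apply StB_spec in Es. eauto.
      * assert (Az : A z) by (apply NNPP; intro nA; apply Hc; right; auto).
        unfold goodB in Ht0. rewrite allb_spec in Ht0. specialize (Ht0 z Hzm).
        apply Nat.eqb_eq in Ht0. unfold bA in Ht0.
        destruct (excluded_middle_informative (A z)); [|contradiction].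
        destruct (StB eA z t0) eqn:Et; [|discriminate].
        apply StB_spec in Et.
        destruct (Nat.le_gt_cases s0 t0).
        -- apply StB_01 in E. apply E. apply (StP_mono _ _ s0); auto.
        -- apply StB_01 in Es. apply Es. apply (StP_mono _ _ t0); auto; lia.
  - unfold W. apply ev_comp with (encE (x :: t0 :: nil)).
    + apply ev_pair' with x (to_nat (t0, 0)). constructor.
      apply ev_pair' with t0 0; [|constructor|reflexivity].
      unfold T0c. apply ev_comp with (to_nat (x, m)).
      * apply ev_pair' with x m. constructor. apply Mc_spec. reflexivity.
      * constructor.
        -- replace 0 with (b2n (negb (goodB m t0))) by (rewrite Ht0; reflexivity).
           apply Gc_spec; auto.
        -- intros t ht. exists 0.
           replace 1 with (b2n (negb (goodB m t))). apply Gc_spec; auto.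
           destruct (goodB m t) eqn:E; auto. exfalso; apply (Hmin t); auto.
      * reflexivity.
    + rewrite <- (OutE_den x t0). apply (compile_noor _ _ OutE (x :: t0 :: nil)). exact OutE_noor.
Qed.

Lemma dir2 : wtt_complete A.
Proof.
  split. exists eA; exact HA.
  exists (enc W), f0. split. exists (enc Fb). apply Fb_spec.
  intros x. destruct (dir2_x x) as (y&H1&H2). exists y. split. exact H1. unfold phiA. rewrite dec_enc.
  split. apply (evalq_mono _ _ _ _ _ _ H2). intros; exact I. exact H2.
Qed.
End Dir2.

Theorem mainTheorem11 (A : nat -> Prop) :
  re A -> (D_weu A <-> wtt_complete A).
Proof.
  intro HreA. split.
  - intros [_ (f & [ef Hf] & HD)]. destruct HreA as [eA HA]. exact (dir2 A eA ef f HA Hf HD).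
  - intros [_ (ew & f0 & [ef0 Hf0] & Hw)]. split; [exact HreA|].
    apply (dir1 A ew ef0 f0 Hf0). intros x; destruct (Hw x) as (y&H1&H2&H3). exists y; split; [exact H1|exact H3].
Qed.
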